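(* Let $G$ be a finite non-abelian group, let $m\ge 2$ be an integer, let $R$ be a Cayley subset of $G$ such that $\Gamma:=\mathrm{Cay}(G,R)$ is a GRR, $|\Gamma[R]_I|\le 1$ and $G=\langle R\setminus\Gamma[R]_I\rangle$, and let $x\in G$ satisfy one of: (1) $m\ge 3$, $x\notin\mathbf{Z}(G)$ and $o(x)>2$; (2) $m=2$ and $x^2\notin\mathbf{Z}(G)$; (3) $m=2$, $g^2\in\mathbf{Z}(G)$ for all $g\in G$, $x\notin\mathbf{Z}(G)\cup R$ and $o(x)>2$. In cases (1) or (3), let $\Theta$ be the graph with vertex set $G\times\{0,\dots,m-1\}$ (writing $g_i$ for $(g,i)$) whose edges are: $\{g_i,(rg)_i\}$ for all $i$, $g\in G$, $r\in R$; $\{g_i,g_{i+1}\}$ for all $g\in G$, $i\in\{0,\dots,m-2\}$; and $\{g_0,(xg)_{m-1}\}$ for all $g\in G$. In case (2), let $\Theta$ be the graph with vertex set $G\times\{0,1\}$ whose edges are $\{g_0,(rg)_0\}$, $\{g_1,(rg)_1\}$ for $g\in G$, $r\in R$, and $\{g_0,(xg)_1\}$ for $g\in G$. Then $\Theta$ is an $m$-GRR for $G$.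
   Context: All groups and graphs are finite and simple. A Cayley subset of $G$ is $R\subseteq G$ with $R=R^{-1}$, $1\notin R$; $\mathrm{Cay}(G,R)$ has vertex set $G$ and edges $\{g,rg\}$, $r\in R$; it is a GRR if its automorphism group is (the right regular copy of) $G$. $\Gamma[R]_I$ is the set of isolated vertices of the subgraph of $\Gamma$ induced on $R$. $\mathbf{Z}(G)$ is the center, $o(g)$ the order of $g$. An $m$-GRR for $G$ is a regular graph having a semiregular automorphism group isomorphic to $G$ with $m$ vertex-orbits and whose full automorphism group is isomorphic to $G$ (here: the group of maps $y_i\mapsto (yg)_i$). *)

(* Defs.v *)
From mathcomp Require Import all_boot all_fingroup all_solvable.
Set Implicit Arguments. Unset Strict Implicit. Unset Printing Implicit Defensive.
Local Open Scope group_scope.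

Definition isAut (V : finType) (adj : rel V) (f : {perm V}) : Prop :=
  forall u v, adj (f u) (f v) = adj u v.

Definition regular_graph (V : finType) (adj : rel V) : Prop :=
  exists k, forall v, #|[set w | adj v w]| = k.

(* Cayley graph Cay(G,R), G the whole group gT: edges {g, r g} *)
Definition cay (gT : finGroupType) (R : {set gT}) : rel gT :=
  fun g h => (h * g^-1) \in R.

Definition is_GRR (gT : finGroupType) (R : {set gT}) : Prop :=
  (forall a : gT, exists f : {perm gT}, isAut (cay R) f /\ forall g, f g = g * a) /\
  (forall f : {perm gT}, isAut (cay R) f -> exists a : gT, forall g, f g = g * a).

Definition isolR (gT : finGroupType) (R : {set gT}) : {set gT} :=
  [set r in R | [forall s in R, ~~ cay R r s]].

Definition rho (gT : finGroupType) (m : nat) (a : gT) (v : gT * 'I_m) : gT * 'I_m :=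
  (v.1 * a, v.2).

(* m-GRR for G with the concrete semiregular group {rho a}: the graph is
   regular and its automorphisms are exactly the maps rho a *)
Definition is_mGRR (gT : finGroupType) (m : nat) (adj : rel (gT * 'I_m)) : Prop :=
  regular_graph adj /\
  (forall a : gT, exists f : {perm (gT * 'I_m)}, isAut adj f /\ forall v, f v = rho a v) /\
  (forall f : {perm (gT * 'I_m)}, isAut adj f -> exists a : gT, forall v, f v = rho a v).

Definition thetaA (gT : finGroupType) (R : {set gT}) (x : gT) (m : nat)
  : rel (gT * 'I_m) :=
  fun u v =>
    let g := u.1 in let i := nat_of_ord u.2 in
    let h := v.1 in let j := nat_of_ord v.2 in
    [|| (i == j) && ((h * g^-1) \in R),
        (g == h) && ((j == i.+1) || (i == j.+1)),
        [&& i == 0%N, j == m.-1 & h == x * g]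
      | [&& j == 0%N, i == m.-1 & g == x * h]].

Definition thetaB (gT : finGroupType) (R : {set gT}) (x : gT) (m : nat)
  : rel (gT * 'I_m) :=
  fun u v =>
    let g := u.1 in let i := nat_of_ord u.2 in
    let h := v.1 in let j := nat_of_ord v.2 in
    [|| [&& i == j, i < 2 & (h * g^-1) \in R],
        [&& i == 0%N, j == 1%N & h == x * g]
      | [&& j == 0%N, i == 1%N & g == x * h]].

(* Main.v *)
Require Import Defs.
From mathcomp Require Import all_boot all_fingroup all_solvable zify.
Set Implicit Arguments. Unset Strict Implicit.
Local Open Scope group_scope.


Lemma aut_adj (V : finType) (adj : rel V) (f : {perm V}) u v :
  isAut adj f -> adj (f u) (f v) = adj u v.
Proof. by move=> H; rewrite H. Qed.

Lemma isAut_inv (V : finType) (adj : rel V) (f : {perm V}) :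
  isAut adj f -> isAut adj f^-1.
Proof. by move=> H u v; rewrite -H !permKV. Qed.

Lemma layer_pres (gT : finGroupType) (m : nat) (R : {set gT}) (adj : rel (gT * 'I_m)) :
  <<R :\: isolR R>> = [set: gT] ->
  (forall p q s, adj (p,s) (q,s) = (q * p^-1 \in R)) ->
  (forall u v w, adj u v -> adj u w -> adj v w -> u.2 = v.2) ->
  forall f : {perm gT * 'I_m}, isAut adj f ->
  forall g h i, (f (g, i)).2 = (f (h, i)).2.
Proof.
move=> hgen hsame htri f hf.
have step : forall r g i, r \in R :\: isolR R -> (f (r * g, i)).2 = (f (g, i)).2.
  move=> r g i; rewrite !inE => /andP [hnI hr].
  have : ~~ [forall s in R, ~~ cay R r s] by move: hnI; rewrite hr.
  rewrite negb_forall => /existsP [s]; rewrite negb_imply negbK => /andP [hs hrs].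
  rewrite /cay in hrs.
  apply/esym; apply: (htri (f (g, i)) (f (r * g, i)) (f (s * g, i))); rewrite hf hsame.
  - by rewrite mulgK.
  - by rewrite mulgK.
  - by rewrite invMg mulgA mulgK.
pose H := [set k | [forall g, forall i, (f (k * g, i)).2 == (f (g, i)).2]].
have gH : group_set H.
  apply/group_setP; split.
    by rewrite inE; apply/forallP => g; apply/forallP => i; rewrite mul1g.
  move=> a b; rewrite !inE => /forallP Ha /forallP Hb.
  apply/forallP => g; apply/forallP => i.
  by rewrite -mulgA (eqP (forallP (Ha _) i)) (eqP (forallP (Hb _) i)).
have HT : forall k, k \in H.
  move=> k; have : k \in <<R :\: isolR R>> by rewrite hgen inE.
  suff sub : <<R :\: isolR R>> \subset Group gH by move/(subsetP sub).
  rewrite gen_subG; apply/subsetP => r hr.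
  by rewrite /= inE; apply/forallP => g; apply/forallP => i; rewrite step.
move=> g h i.
have := HT (g * h^-1); rewrite inE => /forallP /(_ h) /forallP /(_ i) /eqP.
by rewrite mulgKV.
Qed.


Lemma aut_structure (gT : finGroupType) (m : nat) (R : {set gT}) (adj : rel (gT * 'I_m)) :
  is_GRR R -> <<R :\: isolR R>> = [set: gT] ->
  (forall p q s, adj (p,s) (q,s) = (q * p^-1 \in R)) ->
  (forall u v w, adj u v -> adj u w -> adj v w -> u.2 = v.2) ->
  forall f : {perm gT * 'I_m}, isAut adj f ->
  (forall g i, f (g, i) = (g * (f (1,i)).1, (f (1,i)).2)) /\
  (forall i j, (f (1,i)).2 = (f (1,j)).2 -> i = j).
Proof.
move=> [_ hgrr] hgen hsame htri f hf.
have lp := layer_pres hgen hsame htri hf.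
split; last first.
  move=> i j e.
  have lpi := layer_pres hgen hsame htri (isAut_inv hf).
  have := lpi (f (1, i)).1 (f (1, j)).1 (f (1,i)).2.
  by rewrite {2}e -!surjective_pairing !permK => -[].
move=> g i.
pose phi := fun k => (f (k, i)).1.
have phi_inj : injective phi.
  move=> a b e; have : f (a, i) = f (b, i).
    by rewrite [f (a,i)]surjective_pairing [f (b,i)]surjective_pairing (lp a b i) -/(phi a) e.
  by move/perm_inj => -[].
have [a ha] : exists a, forall k, perm phi_inj k = k * a.
  apply: hgrr => u v; rewrite !permE /cay /phi.
  rewrite -[in RHS](hsame u v i) -hf.
  rewrite [f (u,i)]surjective_pairing [f (v,i)]surjective_pairing (lp v u i).
  by rewrite hsame.
have e1 : (f (1, i)).1 = a by have := ha 1; rewrite permE mul1g.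
have eg : (f (g, i)).1 = g * a by have := ha g; rewrite permE.
by rewrite [f (g,i)]surjective_pairing eg e1 (lp g 1 i).
Qed.


Lemma thetaA_same (gT : finGroupType) (R : {set gT}) (x : gT) (m : nat) :
  (2 <= m)%N -> forall p q (s : 'I_m), thetaA R x (p,s) (q,s) = (q * p^-1 \in R).
Proof.
move=> hm p q s; rewrite /thetaA /= eqxx /=.
have -> : (s == s.+1 :> nat) = false by lia.
rewrite andbF /=.
case: (_ =P 0%N) => [e|_]; last by rewrite /= !orbF.
have -> : (s == m.-1 :> nat) = false by lia.
by rewrite /= !orbF.
Qed.

Ltac closeR h1 :=
  match goal with H : is_true (?a * ?a^-1 \in _) |- _ =>
    rewrite mulgV in H; by rewrite H in h1 end.

Ltac closeX m hxR hinv :=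
  match goal with H : is_true (_ \in _) |- _ =>
    rewrite ?invMg ?mulgA ?mulgK ?mulgV ?mul1g in H;
    let e := fresh "e" in assert (e : m = 2%N) by lia; move: (hxR e) => /negP; let hn := fresh "hn" in intro hn; exfalso; apply: hn;
    first [ exact H | by move: (hinv _ H); rewrite invgK ] end.

Ltac close1 hx :=
  match goal with
  | H : ?a = ?b * ?a |- _ => exfalso; move: hx => /eqP; apply; apply: (mulIg a); rewrite mul1g; exact (esym H)
  | H : ?b * ?a = ?a |- _ => exfalso; move: hx => /eqP; apply; apply: (mulIg a); rewrite mul1g; exact H
  end.

Lemma thetaA_tri (gT : finGroupType) (R : {set gT}) (x : gT) (m : nat) :
  (2 <= m)%N -> x != 1 -> (m = 2%N -> x \notin R) ->
  (forall r, r \in R -> r^-1 \in R) -> 1 \notin R ->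
  forall u v w : gT * 'I_m, thetaA R x u v -> thetaA R x u w -> thetaA R x v w -> u.2 = v.2.
Proof.
move=> hm hx hxR hinv h1 [p s] [q t] [y r] /=.
rewrite /thetaA /=.
move=> /or4P [/andP [/eqP e1 h1']|/andP [/eqP e1 /orP [/eqP e2|/eqP e2]]|/and3P [/eqP e1 /eqP e2 /eqP e3]|/and3P [/eqP e1 /eqP e2 /eqP e3]];
move=> /or4P [/andP [/eqP f1 f1']|/andP [/eqP f1 /orP [/eqP f2|/eqP f2]]|/and3P [/eqP f1 /eqP f2 /eqP f3]|/and3P [/eqP f1 /eqP f2 /eqP f3]];
move=> /or4P [/andP [/eqP k1 k1']|/andP [/eqP k1 /orP [/eqP k2|/eqP k2]]|/and3P [/eqP k1 /eqP k2 /eqP k3]|/and3P [/eqP k1 /eqP k2 /eqP k3]];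
subst; try (apply: val_inj => /=; lia); try (exfalso; lia).
all: try closeR h1.
all: try closeX m hxR hinv.
all: try close1 hx.
all: match goal with H : ?z * ?a = ?z * ?b |- _ => move/mulgI: H => H; subst; closeR h1 end.
Qed.


Lemma thetaB_same (gT : finGroupType) (R : {set gT}) (x : gT) (m : nat) :
  m = 2%N -> forall p q (s : 'I_m), thetaB R x (p,s) (q,s) = (q * p^-1 \in R).
Proof.
move=> hm p q s; rewrite /thetaB /= eqxx /=.
have -> : (s < 2)%N by have := ltn_ord s; lia.
case: (_ =P 0%N) => [e|_]; last by rewrite /= !orbF.
have -> : (s == 1%N :> nat) = false by lia.
by rewrite /= !orbF.
Qed.

Lemma thetaB_tri (gT : finGroupType) (R : {set gT}) (x : gT) (m : nat) :
  1 \notin R ->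
  forall u v w : gT * 'I_m, thetaB R x u v -> thetaB R x u w -> thetaB R x v w -> u.2 = v.2.
Proof.
move=> h1 [p s] [q t] [y r] /=.
rewrite /thetaB /=.
move=> /or3P [/and3P [/eqP e1 _ h1']|/and3P [/eqP e1 /eqP e2 /eqP e3]|/and3P [/eqP e1 /eqP e2 /eqP e3]];
move=> /or3P [/and3P [/eqP f1 _ f1']|/and3P [/eqP f1 /eqP f2 /eqP f3]|/and3P [/eqP f1 /eqP f2 /eqP f3]];
move=> /or3P [/and3P [/eqP k1 _ k1']|/and3P [/eqP k1 /eqP k2 /eqP k3]|/and3P [/eqP k1 /eqP k2 /eqP k3]];
subst; try (apply: val_inj => /=; lia); try (exfalso; lia).
all: try closeR h1.
all: try match goal with H : ?z * ?a = ?z * ?b |- _ => move/mulgI: H => H; subst; closeR h1 end.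
Qed.


Lemma central_of (gT : finGroupType) (x : gT) :
  (forall g, g * x = x * g) -> x \in 'Z([set: gT]).
Proof.
move=> h; apply/centerP; split; first by rewrite inE.
by move=> y _; rewrite /commute h.
Qed.

Lemma crossA (gT : finGroupType) (R : {set gT}) (x : gT) n p q (s t : 'I_n.+1) :
  thetaA R x (p,s) (q,t) -> (s != t :> nat) ->
  [\/ p = q /\ ((t == s.+1 :> nat) || (s == t.+1 :> nat)),
      [/\ s = 0%N :> nat, t = n :> nat & q = x * p] |
      [/\ t = 0%N :> nat, s = n :> nat & p = x * q]].
Proof.
rewrite /thetaA /= => /or4P [/andP [/eqP e _]|/andP [/eqP e h]|/and3P [/eqP e1 /eqP e2 /eqP e3]|/and3P [/eqP e1 /eqP e2 /eqP e3]] hst.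
- by rewrite e eqxx in hst.
- by apply: Or31.
- by apply: Or32.
- by apply: Or33.
Qed.

Lemma mulIg1 (gT : finGroupType) (a b : gT) : a = b * a -> b = 1.
Proof. by move=> h; apply: (mulIg a); rewrite mul1g -h. Qed.

Lemma imgA (gT : finGroupType) (R : {set gT}) (x : gT) n aI aJ (sI sJ : 'I_n.+1) :
  (0 < n)%N -> (sI != sJ :> nat) -> x != 1 -> x \notin 'Z([set: gT]) ->
  (forall g, thetaA R x (g * aI, sI) (g * aJ, sJ)) ->
  aI = aJ /\ ((sJ == sI.+1 :> nat) || (sI == sJ.+1 :> nat)).
Proof.
move=> hn hs hx hz H.
case: (crossA (H 1) hs); rewrite !mul1g.
- by [].
- move=> [e1 e2 e3]; exfalso; move/negP: hz; apply; apply: central_of => g.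
  case: (crossA (H g) hs).
  + move=> [/mulgI e _]; move: hx; rewrite -e in e3.
    by rewrite (mulIg1 e3) eqxx.
  + move=> [_ _ e]; apply: (mulIg aI); rewrite -mulgA -e3 e mulgA //.
  + move=> [f1 _ _]; exfalso; lia.
- move=> [e1 e2 e3]; exfalso; move/negP: hz; apply; apply: central_of => g.
  case: (crossA (H g) hs).
  + move=> [/mulgI e _]; move: hx; rewrite e in e3.
    by rewrite (mulIg1 e3) eqxx.
  + move=> [f1 _ _]; exfalso; lia.
  + move=> [_ _ e]; apply: (mulIg aJ); rewrite -mulgA -e3 e mulgA //.
Qed.


Lemma case1 (gT : finGroupType) (R : {set gT}) (x : gT) n (f : {perm gT * 'I_n.+1}) :
  (1 < n)%N -> x != 1 -> x ^+ 2 != 1 -> x \notin 'Z([set: gT]) ->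
  isAut (@thetaA gT R x n.+1) f ->
  (forall g i, f (g, i) = (g * (f (1,i)).1, (f (1,i)).2)) ->
  (forall i j, (f (1,i)).2 = (f (1,j)).2 -> i = j) ->
  exists a, forall v, f v = rho a v.
Proof.
move=> hn hx hx2 hz hf hstr hinj.
pose A := fun k : nat => (f (1, inord k)).1.
pose S := fun k : nat => (f (1, inord k)).2.
have hS : forall k l, (k <= n)%N -> (l <= n)%N -> (S k = S l :> nat) -> k = l.
  move=> k l hk hl e; have := hinj _ _ (val_inj e).
  by move/(congr1 (@nat_of_ord _)); rewrite !inordK.
have step : forall k, (k < n)%N -> A k = A k.+1 /\ ((S k.+1 == (S k).+1 :> nat) || (S k == (S k.+1).+1 :> nat)).
  move=> k hk; apply: (@imgA gT R x n) => //; first lia.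
  - apply/negP => /eqP e; have := hS _ _ (ltnW hk) hk e; lia.
  - move=> g; rewrite /A /S -!hstr hf /thetaA /=.
    have e1 : (inord k : 'I_n.+1) = k :> nat by rewrite inordK //; lia.
    have e2 : (inord k.+1 : 'I_n.+1) = k.+1 :> nat by rewrite inordK //; lia.
    by rewrite e1 e2 !eqxx /= orbT.
have Aconst : forall k, (k <= n)%N -> A k = A 0.
  elim=> [//|k IH] hk; have [e _] := step k hk; rewrite -e IH //; lia.
have wrap : @thetaA gT R x n.+1 (A 0, S 0) (x * A n, S n).
  have := hf (1, inord 0) (x, inord n).
  rewrite hstr [f (x, _)]hstr mul1g => ->.
  by rewrite /thetaA /= !inordK // mulg1 !eqxx /= !orbT.
have S0 : S 0 = 0%N :> nat.
  have hne : (S 0 != S n :> nat) by apply/negP => /eqP e; have := hS _ _ (leq0n _) (leqnn _) e; lia.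
  case: (crossA wrap hne); rewrite (Aconst n (leqnn _)).
  - by move=> [e _]; move: hx; rewrite (mulIg1 e) eqxx.
  - by case.
  - move=> [_ _ e]; move: hx2; rewrite expgS expg1.
    by rewrite mulgA in e; rewrite (mulIg1 e) eqxx.
have Sid : forall k, (k <= n)%N -> forall j, (j <= k)%N -> S j = j :> nat.
  elim=> [|k IH] hk j hj.
    by have -> : j = 0%N by lia.
  case: (ltngtP j k.+1) => [hjk||->]; first by apply: IH => //; lia.
    by lia.
  have [_ /orP [/eqP e|/eqP e]] := step k hk.
    by rewrite e IH //; lia.
  exfalso; case: k IH hk e {hj} => [|k] IH hk e.
    by rewrite IH // in e.
  have h1 := IH (ltnW hk) k.+1 (leqnn _).
  have h2 := IH (ltnW hk) k (leqnSn _).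
  have e' : S k.+2 = S k :> nat by lia.
  have := hS _ _ hk (ltnW (ltnW hk)) e'; lia.
exists (A 0) => -[g i].
rewrite hstr /rho /=.
have hi : (i <= n)%N by have := ltn_ord i; lia.
have := Aconst i hi; have := Sid i hi i (leqnn _).
rewrite /A /S !inord_val => e1 e2.
by rewrite e2; congr pair; apply: val_inj.
Qed.


Lemma ord2P (i : 'I_2) : i = ord0 \/ i = ord_max.
Proof. case: i => [[|[|k]] hi]; [left|right|]; try (by apply: val_inj); by []. Qed.

Lemma case3 (gT : finGroupType) (R : {set gT}) (x : gT) (f : {perm gT * 'I_2}) :
  x != 1 -> x ^+ 2 != 1 -> x \notin 'Z([set: gT]) ->
  isAut (@thetaA gT R x 2) f ->
  (forall g i, f (g, i) = (g * (f (1,i)).1, (f (1,i)).2)) ->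
  (forall i j, (f (1,i)).2 = (f (1,j)).2 -> i = j) ->
  exists a, forall v, f v = rho a v.
Proof.
move=> hx hx2 hz hf hstr hinj.
set a0 := (f (1, ord0)).1; set a1 := (f (1, ord_max)).1.
set S0 := (f (1, ord0)).2; set S1 := (f (1, ord_max)).2.
have hne : (S0 != S1 :> nat).
  by apply/negP => /eqP /val_inj /hinj.
have E1 : forall g, @thetaA gT R x 2 (g * a0, S0) (g * a1, S1).
  by move=> g; rewrite /a0 /a1 /S0 /S1 -!hstr hf /thetaA /= !eqxx /=.
have E2 : forall g, @thetaA gT R x 2 (g * a0, S0) (x * g * a1, S1).
  by move=> g; rewrite /a0 /a1 /S0 /S1 -!hstr hf /thetaA /= !eqxx /= orbT.
have x2 : forall b, b = x * (x * b) -> False.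
  by move=> b e; move: hx2; rewrite mulgA in e; rewrite expgS expg1 (mulIg1 e) eqxx.
have x1 : forall b, b = x * b -> False.
  by move=> b e; move: hx; rewrite (mulIg1 e) eqxx.
have [[e0 e1]|[e0 e1]] : (S0 = 0%N :> nat /\ S1 = 1%N :> nat) \/ (S0 = 1%N :> nat /\ S1 = 0%N :> nat).
  by have := ltn_ord S0; have := ltn_ord S1; lia.
- have ea : a0 = a1.
    case: (crossA (E1 1) hne); rewrite !mul1g; [by case | |by case; lia].
    move=> [_ _ e]; case: (crossA (E2 1) hne); rewrite !mul1g !mulg1.
    + move=> [e' _]; case: (x2 a0); by rewrite -e.
    + by move=> [_ _ /mulgI].
    + by case; lia.
  exists a0 => -[g i]; rewrite hstr /rho /=.
  case: (ord2P i) => ->; congr pair => //; try exact: val_inj.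
  by rewrite -/a1 ea.
- exfalso.
  have ne : a0 != a1.
    apply/eqP => ea; case: (crossA (E2 1) hne); rewrite !mul1g !mulg1.
    + by move=> [e _]; apply: (x1 a0); rewrite {1}e ea.
    + by case; lia.
    + by move=> [_ _ e]; apply: (x2 a0); rewrite {1}e ea.
  have hg : forall g, g * a0 = x * g * a1.
    move=> g; case: (crossA (E1 g) hne).
    + by move=> [/mulgI e _]; rewrite e eqxx in ne.
    + by case; lia.
    + by move=> [_ _ e]; rewrite mulgA in e.
  move/negP: hz; apply; apply: central_of => g.
  have h1 := hg 1; rewrite mul1g mulg1 in h1.
  by apply: (mulIg a1); rewrite -hg -mulgA -h1.
Qed.


Lemma crossB (gT : finGroupType) (R : {set gT}) (x : gT) m p q (s t : 'I_m) :
  thetaB R x (p,s) (q,t) -> (s != t :> nat) ->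
  [/\ s = 0%N :> nat, t = 1%N :> nat & q = x * p] \/
  [/\ t = 0%N :> nat, s = 1%N :> nat & p = x * q].
Proof.
rewrite /thetaB /= => /or3P [/and3P [/eqP e _ _]|/and3P [/eqP e1 /eqP e2 /eqP e3]|/and3P [/eqP e1 /eqP e2 /eqP e3]] hst.
- by rewrite e eqxx in hst.
- by left.
- by right.
Qed.

Lemma case2 (gT : finGroupType) (R : {set gT}) (x : gT) (f : {perm gT * 'I_2}) :
  x ^+ 2 \notin 'Z([set: gT]) ->
  isAut (@thetaB gT R x 2) f ->
  (forall g i, f (g, i) = (g * (f (1,i)).1, (f (1,i)).2)) ->
  (forall i j, (f (1,i)).2 = (f (1,j)).2 -> i = j) ->
  exists a, forall v, f v = rho a v.
Proof.
move=> hz hf hstr hinj.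
set a0 := (f (1, ord0)).1; set a1 := (f (1, ord_max)).1.
set S0 := (f (1, ord0)).2; set S1 := (f (1, ord_max)).2.
have hne : (S0 != S1 :> nat).
  by apply/negP => /eqP /val_inj /hinj.
have E2 : forall g, @thetaB gT R x 2 (g * a0, S0) (x * g * a1, S1).
  by move=> g; rewrite /a0 /a1 /S0 /S1 -!hstr hf /thetaB /= !eqxx /= ?orbT.
have [[e0 e1]|[e0 e1]] : (S0 = 0%N :> nat /\ S1 = 1%N :> nat) \/ (S0 = 1%N :> nat /\ S1 = 0%N :> nat).
  by have := ltn_ord S0; have := ltn_ord S1; lia.
- have ea : a0 = a1.
    case: (crossB (E2 1) hne) => -[f1 f2 e]; try lia.
    by rewrite !mulg1 !mul1g in e; move/mulgI: e.
  exists a0 => -[g i]; rewrite hstr /rho /=.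
  case: (ord2P i) => ->; congr pair => //; try exact: val_inj.
  by rewrite -/a1 ea.
- exfalso.
  have hg : forall g, g * a0 = x ^+ 2 * g * a1.
    move=> g; case: (crossB (E2 g) hne) => -[f1 f2 e]; try lia.
    by rewrite e expgS expg1 !mulgA.
  move/negP: hz; apply; apply: central_of => g.
  have h1 := hg 1; rewrite mul1g mulg1 in h1.
  by apply: (mulIg a1); rewrite -hg -mulgA -h1.
Qed.


Lemma rho_aut (gT : finGroupType) (m : nat) (adj : rel (gT * 'I_m)) :
  (forall a u v, adj (rho a u) (rho a v) = adj u v) ->
  forall a, exists f : {perm gT * 'I_m}, isAut adj f /\ forall v, f v = rho a v.
Proof.
move=> H a.
have inj : injective (@rho gT m a).
  move=> u v; case: u => g i; case: v => h j. rewrite /rho /=. by case=> /mulIg -> ->.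
by exists (perm inj); split => [u v|v]; rewrite !permE.
Qed.

Lemma card_same (gT : finGroupType) (m : nat) (R : {set gT}) (adj : rel (gT * 'I_m)) :
  (forall p q s, adj (p,s) (q,s) = (q * p^-1 \in R)) ->
  forall g i, #|[set w | adj (g,i) w] :&: [set w | w.2 == i]| = #|R|.
Proof.
move=> hsame g i.
have -> : [set w | adj (g,i) w] :&: [set w | w.2 == i] = (fun r => (r * g, i)) @: R.
  apply/setP => -[h j]; rewrite !inE /=.
  apply/idP/imsetP.
  - move=> /andP [hadj /eqP e]; subst j; rewrite hsame in hadj.
    by exists (h * g^-1) => //; rewrite mulgKV.
  - by move=> [r hr [-> ->]]; rewrite eqxx andbT hsame mulgK.
by apply: card_imset => r s [/mulIg].
Qed.

Lemma eq_inord n (j : 'I_n.+1) k : (k <= n)%N -> (j == inord k) = (j == k :> nat).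
Proof. by move=> hk; rewrite -val_eqE /= inordK. Qed.

Lemma eq_xinv (gT : finGroupType) (x g h : gT) : (g == x * h) = (h == x^-1 * g).
Proof. by apply/eqP/eqP => ->; rewrite ?mulKg ?mulKVg. Qed.

Lemma regA (gT : finGroupType) (R : {set gT}) (x : gT) n :
  (0 < n)%N -> x != 1 -> x ^+ 2 != 1 -> regular_graph (@thetaA gT R x n.+1).
Proof.
move=> hn hx hx2; exists (#|R| + 2)%N => -[g i].
rewrite -(cardsID [set w | w.2 == i]) (card_same (@thetaA_same gT R x n.+1 _)); last lia.
congr addn.
pose up : gT * 'I_n.+1 := if (i < n)%N then (g, inord i.+1) else (x^-1 * g, ord0).
pose dn := if (0 < i)%N then (g, inord i.-1) else (x * g, @ord_max n).
have -> : [set w | @thetaA gT R x n.+1 (g,i) w] :\: [set w | w.2 == i] = [set up; dn].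
  apply/setP => -[h j]; rewrite !inE /= /up /dn /thetaA /= [g == x * h]eq_xinv [g == h]eq_sym.
  have hi := ltn_ord i; have hj := ltn_ord j.
  case: ifP => h1; case: ifP => h2; rewrite !xpair_eqE ?eq_inord; try lia;
  rewrite -?val_eqE /=;
  move: (h * g^-1 \in R) (h == g) (h == x * g) (h == x^-1 * g) => b0 b1 b2 b3; lia.
rewrite cards2.
suff -> : up != dn by [].
have f1 : (g == x * g) = false.
  apply/negbTE; apply: contra hx => /eqP e; apply/eqP; exact: (mulIg1 e).
have f2 : (x^-1 * g == g) = false by rewrite eq_sym -eq_xinv.
rewrite /up /dn; have hi := ltn_ord i.
case: ifP => h1; case: ifP => h2; rewrite !xpair_eqE ?eq_inord; try lia;
rewrite -?val_eqE /= ?f1 ?f2 //=; rewrite ?inordK; lia.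
Qed.

Lemma regB (gT : finGroupType) (R : {set gT}) (x : gT) :
  regular_graph (@thetaB gT R x 2).
Proof.
exists (#|R| + 1)%N => -[g i].
rewrite -(cardsID [set w | w.2 == i]) (card_same (@thetaB_same gT R x 2 _)) //.
congr addn.
pose c : gT * 'I_2 := if (i == 0 :> nat) then (x * g, ord_max) else (x^-1 * g, ord0).
have -> : [set w | @thetaB gT R x 2 (g,i) w] :\: [set w | w.2 == i] = [set c].
  apply/setP => -[h j]; rewrite !inE /= /c /thetaB /= [g == x * h]eq_xinv.
  have hi := ltn_ord i; have hj := ltn_ord j.
  case: ifP => h1; rewrite !xpair_eqE; rewrite -?val_eqE /=;
  move: (h * g^-1 \in R) (h == x * g) (h == x^-1 * g) => b0 b2 b3; lia.
by rewrite cards1.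
Qed.

Lemma invA (gT : finGroupType) (R : {set gT}) (x : gT) m a u v :
  @thetaA gT R x m (rho a u) (rho a v) = @thetaA gT R x m u v.
Proof.
case: u v => [g i] [h j]; rewrite /thetaA /rho /=.
by rewrite invMg mulgA mulgK !mulgA !(inj_eq (mulIg a)).
Qed.

Lemma invB (gT : finGroupType) (R : {set gT}) (x : gT) m a u v :
  @thetaB gT R x m (rho a u) (rho a v) = @thetaB gT R x m u v.
Proof.
case: u v => [g i] [h j]; rewrite /thetaB /rho /=.
by rewrite invMg mulgA mulgK !mulgA !(inj_eq (mulIg a)).
Qed.


Unset Implicit Arguments. Set Strict Implicit.

Theorem lemma3p7 (gT : finGroupType) (m : nat) (R : {set gT}) (x : gT) :
  ~~ abelian [set: gT] ->
  (2 <= m)%N ->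
  (forall r, r \in R -> r^-1 \in R) ->
  1 \notin R ->
  is_GRR R ->
  (#|isolR R| <= 1)%N ->
  <<R :\: isolR R>> = [set: gT] ->
  (* cases (1) and (3) *)
  ( ([/\ (3 <= m)%N, x \notin 'Z([set: gT]) & (2 < #[x])%N] \/
     [/\ m = 2%N, (forall g : gT, g ^+ 2 \in 'Z([set: gT])),
         x \notin ('Z([set: gT]) :|: R) & (2 < #[x])%N]) ->
    @is_mGRR gT m (@thetaA gT R x m) ) /\
  (* case (2) *)
  ( (m = 2%N /\ x ^+ 2 \notin 'Z([set: gT])) ->
    @is_mGRR gT m (@thetaB gT R x m) ).
Proof.
move=> _ hm hinv h1 hgrr _ hgen.
case: m hm => [//|n] hm.
split.
- move=> hcase.
  have [hz ho hxR] : [/\ x \notin 'Z([set: gT]), (2 < #[x])%N & (n.+1 = 2%N -> x \notin R)].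
    case: hcase => [[h3 hz ho]|[e _ hzR ho]].
      by split=> // e; exfalso; lia.
    by move: hzR; rewrite inE negb_or => /andP [hz hr].
  have hx : x != 1.
    by apply: contraTneq ho => ->; rewrite order1.
  have hx2 : x ^+ 2 != 1.
    apply/negP => /eqP e; have : (#[x] %| 2)%N by rewrite order_dvdn e.
    by move/dvdn_leq => /(_ isT); lia.
  have hn : (0 < n)%N by lia.
  split; first exact: regA.
  split; first exact: rho_aut (@invA gT R x n.+1).
  move=> f hf.
  have [hstr hinj] := aut_structure hgrr hgen (@thetaA_same gT R x n.+1 hm)
     (@thetaA_tri gT R x n.+1 hm hx hxR hinv h1) hf.
  case: (ltngtP 1 n) => [h1n||e].
  + exact: case1 h1n hx hx2 hz hf hstr hinj.
  + lia.
  + subst n; exact: case3 hx hx2 hz hf hstr hinj.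
- move=> [e hz]; case: n e hm => [//|[|//]] _ hm.
  split; first exact: regB.
  split; first exact: rho_aut (@invB gT R x 2).
  move=> f hf.
  have [hstr hinj] := aut_structure hgrr hgen (@thetaB_same gT R x 2 erefl)
     (@thetaB_tri gT R x 2 h1) hf.
  exact: case2 hz hf hstr hinj.
Qed.
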